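(* Let $0<\alpha<\varepsilon<1$ be constants, let $c=(1+\varepsilon)n$ and $\frac{\log n}{n}\le p\le\frac{2\log n}{n}$. Then with probability $1-o(1)$ the graph $G\sim\mathcal G_c(n,p)$ has the following property: for every $\mathcal C^*\subseteq[c]$ with $|\mathcal C^*|\ge(1+\alpha)n$, the graph $G[[n];\mathcal C^*]$ is $k$-rainbow-pseudorandom for $k=\frac{n}{\log^{0.49}n}$.
   Context: $\mathcal G_c(n,p)$: random graph on $[n]$, each pair an edge independently with probability $p$, each edge colored uniformly and independently from $[c]$. $G[[n];\mathcal C^*]$ is the spanning subgraph of $G$ consisting of the edges with color in $\mathcal C^*$. An edge-colored graph on $n$ vertices is $k$-rainbow-pseudorandom if for every two disjoint vertex sets $A,B$ with $|A|=|B|=k$, the number of distinct colors on the edges between $A$ and $B$ is at least $n$. Asymptotics as $n\to\infty$. *)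

(* Defs.v *)
From HB Require Import structures.
From mathcomp Require Import all_boot all_order all_algebra.
From mathcomp Require Import all_classical all_reals all_analysis.
Set Implicit Arguments. Unset Strict Implicit. Unset Printing Implicit Defensive.
Import Order.TTheory GRing.Theory Num.Theory.
Local Open Scope ring_scope.

(* unordered pairs {i,j} of [n] = 'I_n, represented as (i,j) with i < j *)
Definition epair (n : nat) := {e : 'I_n * 'I_n | (e.1 < e.2)%N}.

(* an edge-colored graph on [n] with colors in [c] = 'I_c :
   each pair is either a non-edge (None) or an edge of color col (Some col) *)
Definition cgraph (n c : nat) := {ffun epair n -> option 'I_c}.

Definition ecol n c (G : cgraph n c) (a b : 'I_n) : option 'I_c :=
  match insub (a, b) : option (epair n) with
  | Some e => G e
  | None => match insub (b, a) : option (epair n) with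
            | Some e => G e
            | None => None
            end
  end.

(* probability of an outcome G under G_c(n,p): edges independent with
   probability p, each edge colour uniform in [c] *)
Definition Gnp_weight (R : realType) n c (p : R) (G : cgraph n c) : R :=
  \prod_(e : epair n) (match G e with None => 1 - p | Some _ => p / c%:R end).

Definition colors_between n c (G : cgraph n c) (Cs : {set 'I_c})
  (A B : {set 'I_n}) : {set 'I_c} :=
  [set col in Cs | [exists a in A, exists b in B, ecol G a b == Some col]].

Definition rainbow_pseudorandom n c (G : cgraph n c) (Cs : {set 'I_c}) (k : nat)
  : Prop :=
  forall A B : {set 'I_n}, [disjoint A & B] -> #|A| = k -> #|B| = k ->
    (n <= #|colors_between G Cs A B|)%N.

Definition lemma12_prop (R : realType) (alpha : R) n c (k : nat) (G : cgraph n c)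
  : bool :=
  [forall Cs : {set 'I_c},
     ((1 + alpha) * n%:R <= #|Cs|%:R) ==>
     `[< rainbow_pseudorandom G Cs k >]].

Definition prob_Gc (R : realType) n c (p : R) (P : pred (cgraph n c)) : R :=
  \sum_(G : cgraph n c | P G) Gnp_weight p G.

Definition ncolors (R : realType) (eps : R) (n : nat) : nat :=
  Num.truncn ((1 + eps) * n%:R).
Definition kpar (R : realType) (n : nat) : nat :=
  Num.truncn (n%:R / powR (ln (n%:R : R)) (49%:R / 100%:R)).

(* Main.v *)
Require Import Defs.
From HB Require Import structures.
From mathcomp Require Import all_boot all_order all_algebra.
From mathcomp Require Import all_classical all_reals all_analysis.
From mathcomp Require Import zify ring lra.
Import Order.TTheory GRing.Theory Num.Theory.
Import numFieldNormedType.Exports.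
Local Open Scope ring_scope.
Set Implicit Arguments. Unset Strict Implicit.

Lemma card_setT (T : finType) : #|{: {set T}}| = (2 ^ #|T|)%N.
Proof.
have e : powerset [set: T] = [set: {set T}].
  by apply/setP => A; by rewrite powersetE finset.subsetT finset.in_setT.
by rewrite -[LHS]cardsT -e card_powerset cardsT.
Qed.

Section Comb.
Variables (R : realType) (n c : nat) (p : R).

Lemma sum_option (T : finType) (G : option T -> R) :
  \sum_j G j = G None + \sum_i G (Some i).
Proof.
rewrite (bigD1 None) //=; congr (_ + _).
rewrite (reindex_omap Some id) //=; last by case.
by apply: eq_bigl => i /=; rewrite eqxx.
Qed.

Definition wt (o : option 'I_c) : R :=
  match o with None => 1 - p | Some _ => p / c%:R end.

Definition okcol (D : {set 'I_c}) (o : option 'I_c) : bool :=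
  if o is Some col then col \notin D else true.

Lemma sum_wt (D : {set 'I_c}) : (0 < c)%N ->
  \sum_(j | okcol D j) wt j = 1 - p * #|D|%:R / c%:R.
Proof.
move=> c0; rewrite big_mkcond sum_option /=.
rewrite (eq_bigr (fun i => if i \notin D then p / c%:R else 0)); last first.
  by move=> i _; case: (i \in D).
rewrite -big_mkcond /= sumr_const.
have -> : #|[pred i | i \notin D]| = (c - #|D|)%N.
  have h1 : #|[pred i | i \notin D]| = #|[predC D]| by apply: eq_card.
  by rewrite h1; have := cardC D; rewrite card_ord; lia.
have hD : (#|D| <= c)%N by rewrite -[X in (_ <= X)%N]card_ord max_card.
rewrite -[_ *+ _]mulr_natr natrB //.

have cn0 : (c%:R : R) != 0 by rewrite pnatr_eq0 -lt0n.
by field.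
Qed.

Lemma sum_fam (S : {set epair n}) (D : {set 'I_c}) : (0 < c)%N ->
  \sum_(G : cgraph n c | [forall e in S, okcol D (G e)]) Gnp_weight p G
  = \prod_(e : epair n) (if e \in S then 1 - p * #|D|%:R / c%:R else 1).
Proof.
move=> c0.
have h : forall e, (if e \in S then 1 - p * #|D|%:R / c%:R else 1)
   = \sum_(j | (e \in S) ==> okcol D j) wt j.
  move=> e; case: (e \in S) => /=; first by rewrite sum_wt.
  have := sum_wt finset.set0 c0; rewrite cards0 mulr0 mul0r subr0 => <-.
  by apply: eq_bigl => -[i|] //=; rewrite inE.
rewrite (eq_bigr _ (fun e _ => h e)) bigA_distr_big_dep.
apply: eq_big => G //.
Qed.

Definition cross (A B : {set 'I_n}) : {set epair n} :=
  [set e | (((val e).1 \in A) && ((val e).2 \in B)) ||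
           (((val e).1 \in B) && ((val e).2 \in A))].

Lemma card_cross (A B : {set 'I_n}) :
  [disjoint A & B] -> (#|A| * #|B| <= #|cross A B|)%N.
Proof.
move=> dAB.
pose h (e : epair n) : 'I_n * 'I_n :=
  if (val e).1 \in A then val e else ((val e).2, (val e).1).
rewrite -cardsX; apply: leq_trans (leq_imset_card h (cross A B)).
apply: subset_leq_card; apply/fintype.subsetP => -[a b] /setXP [aA bB].
have bA : (b \in A) = false by apply: (disjointFl dAB).
case: (ltngtP a b) => [lt|gt|eq].
- apply/imsetP; exists (exist _ (a, b) lt : epair n).
    by rewrite inE /= aA bB.
  by rewrite /h /= aA.
- apply/imsetP; exists (exist _ (b, a) gt : epair n).
    by rewrite inE /= aA bB orbT.
  by rewrite /h /= bA.
- by move: bA; rewrite -(val_inj eq) aA.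
Qed.

Lemma ecol_e (G : cgraph n c) (e : epair n) :
  ecol G (val e).1 (val e).2 = G e /\ ecol G (val e).2 (val e).1 = G e.
Proof.
case: e => [[x y] h] /=; rewrite /ecol; split.
  case: insubP => [e' _ He'|] /=; last by rewrite h.
  by congr (G _); apply: val_inj; rewrite He'.
case: insubP => [e' He' _|_] /=.
  by move: He'; rewrite /= ltnNge ltnW.
case: insubP => [e' _ He'|] /=; last by rewrite h.
by congr (G _); apply: val_inj; rewrite He'.
Qed.

Definition badt (G : cgraph n c) (t : {set 'I_n} * {set 'I_n} * {set 'I_c}) :=
  [forall e in cross t.1.1 t.1.2, okcol t.2 (G e)].
Definition goodt (alpha : R) (k : nat) (t : {set 'I_n} * {set 'I_n} * {set 'I_c}) :=
  [&& [disjoint t.1.1 & t.1.2], #|t.1.1| == k, #|t.1.2| == k &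
      alpha * n%:R <= #|t.2|%:R].

Lemma not_prop (alpha : R) (k : nat) (G : cgraph n c) :
  ~~ lemma12_prop alpha k G -> exists t, goodt alpha k t && badt G t.
Proof.
move/forallPn => [Cs]; rewrite negb_imply => /andP [hCs /asboolPn hrp].
have [A [B [dAB [hA [hB hlt]]]]] : exists (A B : {set 'I_n}), [disjoint A & B] /\ #|A| = k /\
    #|B| = k /\ (#|colors_between G Cs A B| < n)%N.
  case: (pselect (exists (A B : {set 'I_n}), [disjoint A & B] /\ #|A| = k /\
    #|B| = k /\ (#|colors_between G Cs A B| < n)%N)) => // hne; exfalso.
  apply: hrp => A B dAB hA hB; rewrite leqNgt; apply/negP => hlt.
  by apply: hne; exists A, B.
set cb := colors_between G Cs A B.
have cbCs : cb \subset Cs.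
  by apply/fintype.subsetP => x; rewrite inE => /andP[].
exists (A, B, Cs :\: cb); apply/andP; split.
  rewrite /goodt /= dAB hA hB !eqxx /=.
  rewrite cardsD (finset.setIidPr cbCs) natrB ?subset_leq_card //.
  have : (#|cb|%:R : R) <= n%:R by rewrite ler_nat ltnW.
  move: hCs; lra.
apply/forall_inP => e; rewrite inE => he.
case hGe : (G e) => [col|] //=.
apply/negP; rewrite inE => /andP [ncb cCs].
move/negP: ncb; apply; rewrite inE cCs /=.
have [e1 e2] := ecol_e G e.
case/orP: he => /andP [/= h1 h2]; apply/existsP.
  exists (sval e).1; rewrite h1 /=; apply/existsP; exists (sval e).2.
  by rewrite h2 e1 hGe /= eqxx.
exists (sval e).2; rewrite h2 /=; apply/existsP; exists (sval e).1.
by rewrite h1 e2 hGe /= eqxx.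
Qed.

Lemma bad_bound (alpha : R) (k : nat) t : (0 < c)%N -> 0 <= p -> p <= 1 ->
  0 <= alpha -> goodt alpha k t ->
  \sum_(G : cgraph n c | badt G t) Gnp_weight p G
    <= expR (- (p * alpha * n%:R / c%:R)) ^+ (k * k).
Proof.
move=> c0 p0 p1 a0 /and4P [dAB /eqP hA /eqP hB hM].
rewrite (sum_fam _ _ c0).
set y := expR _.
have cpos : (0 : R) < c%:R by rewrite ltr0n.
have hMc : (#|t.2|%:R : R) <= c%:R.
  by rewrite ler_nat -[X in (_ <= X)%N]card_ord max_card.
have y1 : y <= 1.
  rewrite /y -expR0 ler_expR oppr_le0; apply: divr_ge0 => //; apply: mulr_ge0 => //; exact: mulr_ge0.
have y0 : 0 <= y by apply: expR_ge0.
apply: (@le_trans _ _ (\prod_(e : epair n) (if e \in cross t.1.1 t.1.2 then y else 1))).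
  apply: ler_prod => e _; case: ifP => _; last by rewrite lexx ler01.
  apply/andP; split.
    rewrite subr_ge0 ler_pdivrMr // mul1r.
    have : 0 <= #|t.2|%:R :> R by [].
    by nra.
  apply: (le_trans _ (expR_ge1Dx _)).
  rewrite lerD2l lerN2 ler_pM2r ?invr_gt0 // -mulrA.
  exact: ler_wpM2l.
rewrite -big_mkcond /= prodr_const.
apply: ler_wiXn2l => //.
by have := card_cross dAB; rewrite hA hB.
Qed.

Lemma wt_ge0 (G : cgraph n c) : 0 <= p -> p <= 1 -> 0 <= Gnp_weight p G.
Proof.
move=> p0 p1; apply: prodr_ge0 => e _; case: (G e) => [_|].
  by apply: divr_ge0.
by rewrite subr_ge0.
Qed.

Lemma fail_bound (alpha : R) (k : nat) : (0 < c)%N -> 0 <= p -> p <= 1 ->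
  0 <= alpha ->
  \sum_(G : cgraph n c | ~~ lemma12_prop alpha k G) Gnp_weight p G
    <= (2 ^ (n + n + c))%:R * expR (- (p * alpha * n%:R / c%:R)) ^+ (k * k).
Proof.
move=> c0 p0 p1 a0.
set Bd := expR _ ^+ _.
apply: (@le_trans _ _ (\sum_(G : cgraph n c | ~~ lemma12_prop alpha k G)
     \sum_(t | goodt alpha k t && badt G t) Gnp_weight p G)).
  apply: ler_sum => G /not_prop [t ht].
  rewrite (bigD1 t) //= lerDl; apply: sumr_ge0 => *; exact: wt_ge0.
apply: (@le_trans _ _ (\sum_(G : cgraph n c)
     \sum_(t | goodt alpha k t && badt G t) Gnp_weight p G)).
  rewrite [X in _ <= X](bigID (fun G => ~~ lemma12_prop alpha k G)) /= lerDl.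
  by apply: sumr_ge0 => G _; apply: sumr_ge0 => *; exact: wt_ge0.
under eq_bigr do rewrite big_mkcondr.
rewrite exchange_big /=.
apply: (@le_trans _ _ (\sum_(t | goodt alpha k t) Bd)).
  apply: ler_sum => t ht; rewrite -big_mkcond /=.
  exact: bad_bound.
rewrite sumr_const -[Bd *+ _]mulr_natl.
apply: ler_wpM2r; first exact: exprn_ge0 (expR_ge0 _).
rewrite ler_nat; apply: leq_trans (max_card _) _.
by rewrite !card_prod !card_setT !card_ord -!expnD.
Qed.

Lemma prob_split (P : pred (cgraph n c)) : (0 < c)%N ->
  prob_Gc p P = 1 - \sum_(G : cgraph n c | ~~ P G) Gnp_weight p G.
Proof.
move=> c0.
have tot : \sum_(G : cgraph n c) Gnp_weight p G = 1.
  have := sum_fam finset.set0 finset.set0 c0.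
  have -> : \prod_(e : epair n) (if e \in finset.set0 then 1 - p * #|(finset.set0 : {set 'I_c})|%:R / c%:R else 1) = 1.
    by apply: big1 => e _; rewrite finset.in_set0.
  move=> <-; apply: eq_bigl => G; apply/esym/forall_inP => e.
  by rewrite finset.in_set0.
by rewrite /prob_Gc -tot [X in _ = X - _](bigID P) /= addrK.
Qed.
End Comb.

Section Ana.
Variable R : realType.

Lemma ln_half (x : R) : 8 <= x -> ln x <= x / 2.
Proof.
move=> x8.
have e : x = 4 * (x / 4) by field.
rewrite {1}e lnM ?posrE; [|lra|lra].
have h1 : ln (4 : R) <= 3.
  have := @le_ln1Dx R 3; have -> : (1 + 3 : R) = 4 by ring.
  by apply; lra.
have h2 : ln (x / 4) <= x / 4 - 1.
  have := @le_ln1Dx R (x / 4 - 1); have -> : 1 + (x / 4 - 1) = x / 4 by ring.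
  by apply; lra.
lra.
Qed.


Lemma key_bound (alpha eps : R) (p : nat -> R) :
  0 < alpha -> 0 < eps -> eps < 1 ->
  (forall n : nat, ln (n%:R : R) / n%:R <= p n <= 2 * ln (n%:R : R) / n%:R) ->
  exists N, forall n, (N <= n)%N ->
    [/\ (0 < ncolors eps n)%N, 0 <= p n, p n <= 1 &
     (2 ^ (n + n + ncolors eps n))%:R *
       expR (- (p n * alpha * n%:R / (ncolors eps n)%:R)) ^+ (kpar R n * kpar R n)
       <= expR (- n%:R)].
Proof.
move=> a0 e0 e1 hp.
set T := Num.max 1 ((40 / alpha) `^ 50).
exists (maxn 8 (Num.truncn (expR T)).+1) => n hn.
have n8' : (8 <= n)%N by move: hn; rewrite geq_max => /andP[].
have n8 : 8 <= (n%:R : R) by rewrite (ler_nat R 8).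
have npos : (0 : R) < n%:R by lra.
have nT : expR T <= n%:R.
  have h : ((Num.truncn (expR T)).+1 <= n)%N by move: hn; rewrite geq_max => /andP[].
  apply: ltW; apply: (lt_le_trans (truncnS_gt _)); by rewrite ler_nat.
set L := ln (n%:R : R).
have LT : T <= L by rewrite -(expRK T) /L ler_ln ?posrE ?expR_gt0.
have L1 : 1 <= L by apply: le_trans LT; rewrite /T le_max lexx.
have Llam : 40 / alpha <= L `^ (1 / 50).
  have h : (40 / alpha) `^ 50 <= L by apply: le_trans LT; rewrite /T le_max lexx orbT.
  have r0 : (0 : R) <= 1 / 50 by lra.
  have x0 : (40 / alpha) `^ 50 \is Num.nneg by rewrite nnegrE powR_ge0.
  have y0 : L \is Num.nneg by rewrite nnegrE; lra.
  have := @ge0_ler_powR R (1 / 50) r0 _ _ x0 y0 h.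
  rewrite -powRrM.
  have -> : (50 : R) * (1 / 50) = 1 by field.
  by rewrite powRr1 //; apply: divr_ge0; lra.
set q := L `^ (49%:R / 100%:R).
have q1 : 1 <= q.
  have := @ge0_ler_powR R (49%:R / 100%:R) _ 1 L _ _ L1.
  rewrite powR1; apply.
  - by apply: divr_ge0.
  - by rewrite nnegrE.
  - by rewrite nnegrE; lra.
have qL : q <= L by apply: ler1_powR => //; rewrite ler_pdivrMr ?mul1r ?ler_nat ?ltr0n.
have Lh : L <= n%:R / 2 by apply: ln_half.
have hL : L = q * q * L `^ (1 / 50).
  have Ln0 : L != 0 by apply/negP => /eqP; lra.
  rewrite /q -!powRD ?Ln0 ?implybT //.
  have -> : (49%:R / 100%:R + 49%:R / 100%:R + 1 / 50 : R) = 1 by field.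
  by rewrite powRr1 //; lra.
set k := kpar R n.
have hk : n%:R <= 2 * (q * k%:R).
  have t := @truncnS_gt R (n%:R / q).
  have kd : Num.truncn (n%:R / q) = k by [].
  rewrite kd ltr_pdivrMr in t; last by lra.
  have : (k.+1%:R : R) = k%:R + 1 by rewrite -natr1.
  move=> e; rewrite e in t.
  nra.
set c := ncolors eps n.
have hc : (c%:R : R) <= 2 * n%:R.
  apply: (@le_trans _ _ ((1 + eps) * n%:R)); last by nra.
  by rewrite truncn_le; nra.
have c0 : (0 < c)%N by rewrite truncn_gt0; nra.
have cpos : (0 : R) < c%:R by rewrite ltr0n.
have /andP [pl pu] := hp n; rewrite -/L in pl pu.
have u : L <= p n * n%:R by rewrite -ler_pdivrMr.
have p0 : 0 <= p n by apply: le_trans pl; apply: divr_ge0; lra.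
have p1 : p n <= 1 by apply: le_trans pu _; rewrite ler_pdivrMr //; lra.
split => //.
set x := p n * alpha * n%:R / c%:R.
have lam40 : 40 <= alpha * L `^ (1 / 50).
  by move: Llam; rewrite ler_pdivrMr // mulrC.
have hx : 5 * n%:R <= (k * k)%:R * x.
  rewrite /x natrM mulrA mulrA ler_pdivlMr //.
  have s1 : n%:R ^+ 2 <= 4 * (q * k%:R) ^+ 2 by nra.
  have s3 : 10 * n%:R ^+ 2 <= alpha * k%:R ^+ 2 * L.
    rewrite hL.
    have e : alpha * k%:R ^+ 2 * (q * q * L `^ (1 / 50)) =
             (alpha * L `^ (1 / 50)) * (q * k%:R) ^+ 2 by ring.
    rewrite e; nra.
  have s4 : alpha * k%:R ^+ 2 * L <= alpha * k%:R ^+ 2 * (p n * n%:R).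
    by apply: ler_wpM2l => //; apply: mulr_ge0; [lra| apply: sqr_ge0].
  have e : k%:R * k%:R * (p n * alpha) * n%:R = alpha * k%:R ^+ 2 * (p n * n%:R) by ring.
  rewrite e; nra.
have h2 : ((2 ^ (n + n + c))%:R : R) <= expR (4 * n%:R).
  rewrite natrX.
  have e2 : (2 : R) <= expR 1 by have := expR_ge1Dx (1 : R); lra.
  apply: (@le_trans _ _ (expR 1 ^+ (n + n + c))).
    by apply: lerXn2r; rewrite ?nnegrE ?expR_ge0.
  rewrite -expRM_natl mulr1 ler_expR !natrD; lra.
rewrite -expRM_natl.
apply: le_trans (ler_pM _ _ h2 (lexx _)) _.
- by rewrite ler0n.
- exact: expR_ge0.
rewrite -expRD ler_expR; lra.
Qed.
End Ana.
Unset Implicit Arguments.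
Local Open Scope classical_set_scope.
Local Open Scope ring_scope.
Set Strict Implicit.

Theorem lemma12 (R : realType) (alpha eps : R) (p : nat -> R) :
  0 < alpha -> alpha < eps -> eps < 1 ->
  (forall n : nat, ln (n%:R : R) / n%:R <= p n <= 2 * ln (n%:R : R) / n%:R) ->
  (fun n : nat =>
     prob_Gc (p n) (@lemma12_prop R alpha n (ncolors eps n) (kpar R n)))
    @ \oo --> (1 : R).
Proof.
move=> a0 ae e1 hp.
have e0 : 0 < eps by apply: lt_trans ae.
have [N HN] := key_bound a0 e0 e1 hp.
apply/cvgrPdist_le => eps' epos.
near=> n.
have hN : (N <= n)%N by near: n; exact: nbhs_infty_ge.
have hn : eps'^-1 <= n%:R by near: n; exact: nbhs_infty_ger.
have [c0 p0 p1 hb] := HN n hN.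
rewrite prob_split // opprB addrC subrK.
set F := \sum_(G | _) _.
have F0 : 0 <= F by apply: sumr_ge0 => G _; exact: wt_ge0.
rewrite ger0_norm //.
apply: le_trans (fail_bound n (kpar R n) c0 p0 p1 (ltW a0)) _.
apply: le_trans hb _.
rewrite expRN -[X in _ <= X]invrK lef_pV2 ?posrE ?invr_gt0 ?expR_gt0 //.
apply: le_trans hn _.
have := expR_ge1Dx (n%:R : R); lra.
Unshelve. all: end_near.
Qed.
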